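(* Let $\mathcal A=(Q,d,T_u,T_f,T_s,\emptyset)$ be an ABVASS, $q_r\in Q$, $\vec v_0\in\mathbb N^d$ and $Q_\ell\subseteq Q$. If $\mathcal A$ has a $(q_r,\vec v_0)$-rooted $Q_\ell$-leaf-covering deduction tree, then it has such a deduction tree of height at most $H(d,|Q|,\max^-(T_u))$.
   Context: An ABVASS is a tuple $\mathcal A=(Q,d,T_u,T_f,T_s,\emptyset)$ with $Q$ a finite set of states, $d\in\mathbb N$, and finite sets of unary rules $T_u\subseteq Q\times\mathbb Z^d\times Q$, fork rules $T_f\subseteq Q^3$, split rules $T_s\subseteq Q^3$. A deduction tree is a finite tree labelled by configurations $(q,\vec v)\in Q\times\mathbb N^d$ where each internal node $(q,\vec v)$ has either one child $(q_1,\vec v+\vec u)\in Q\times\mathbb N^d$ for a unary rule $(q,\vec u,q_1)$, two children $(q_1,\vec v),(q_2,\vec v)$ for a fork rule $(q,q_1,q_2)$, or two children $(q_1,\vec v_1),(q_2,\vec v_2)$ with $\vec v_1+\vec v_2=\vec v$ for a split rule $(q,q_1,q_2)$. It is $(q_r,\vec v_0)$-rooted if its root is labelled $(q_r,\vec v_0)$, $Q_\ell$-leaf-covering if every leaf label $(q,\vec v)$ has $q\in Q_\ell$ (no condition on $\vec v$), and its height is the maximum number of edges on a root-to-leaf path. $\max^-(T_u)$ is the largest absolute value of a negative integer occurring in a vector of $T_u$ (and $0$ if there is none). For integers $d,m\ge0$, $s\ge1$: $H(0,s,m)=s$ and $H(d+1,s,m)=s\,(m\cdot 2^{H(d,s,m)})^{d+1}+H(d,s,m)$.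 *)

(* Defs.v *)
From HB Require Import structures.
From mathcomp Require Import all_boot all_order all_algebra.
Set Implicit Arguments. Unset Strict Implicit. Unset Printing Implicit Defensive.
Import Order.TTheory GRing.Theory Num.Theory.

Inductive dtree (Q : Type) (d : nat) : Type :=
  | DLeaf  : Q -> {ffun 'I_d -> nat} -> dtree Q d
  | DUnary : Q -> {ffun 'I_d -> nat} -> dtree Q d -> dtree Q d
  | DBin   : Q -> {ffun 'I_d -> nat} -> dtree Q d -> dtree Q d -> dtree Q d.

Section Trees.
Variables (Q : finType) (d : nat).

Definition root_state (t : dtree Q d) : Q :=
  match t with DLeaf q _ | DUnary q _ _ | DBin q _ _ _ => q end.

Definition root_vec (t : dtree Q d) : {ffun 'I_d -> nat} :=
  match t with DLeaf _ v | DUnary _ v _ | DBin _ v _ _ => v end.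

Fixpoint height (t : dtree Q d) : nat :=
  match t with
  | DLeaf _ _ => 0
  | DUnary _ _ t1 => (height t1).+1
  | DBin _ _ t1 t2 => (maxn (height t1) (height t2)).+1
  end.

Variables (Tu : seq (Q * {ffun 'I_d -> int} * Q)) (Tf Ts : {set Q * Q * Q}).

Fixpoint deduction_tree (t : dtree Q d) : Prop :=
  match t with
  | DLeaf _ _ => True
  | DUnary q v t1 =>
      (exists u : {ffun 'I_d -> int},
          (q, u, root_state t1) \in Tu /\
          forall i : 'I_d, ((root_vec t1 i)%:Z = (v i)%:Z + u i)%R)
      /\ deduction_tree t1
  | DBin q v t1 t2 =>
      (((q, root_state t1, root_state t2) \in Tf /\
          root_vec t1 = v /\ root_vec t2 = v)
       \/
       ((q, root_state t1, root_state t2) \in Ts /\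
          forall i : 'I_d, root_vec t1 i + root_vec t2 i = v i))
      /\ deduction_tree t1 /\ deduction_tree t2
  end.

Fixpoint leaf_covering (Ql : {set Q}) (t : dtree Q d) : Prop :=
  match t with
  | DLeaf q _ => q \in Ql
  | DUnary _ _ t1 => leaf_covering Ql t1
  | DBin _ _ t1 t2 => leaf_covering Ql t1 /\ leaf_covering Ql t2
  end.

Definition negpart (z : int) : nat := if (z < 0)%R then `|z|%N else 0.

Definition maxneg : nat :=
  \max_(r <- Tu) \max_(i < d) negpart (r.1.2 i).

End Trees.

Fixpoint Hbound (d s m : nat) : nat :=
  match d with
  | 0 => s
  | d'.+1 => s * (m * 2 ^ (Hbound d' s m)) ^ d'.+1 + Hbound d' s m
  end.

(* Main.v *)
Require Import Defs.
From mathcomp Require Import all_boot all_order all_algebra.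
From mathcomp Require Import zify.
From Stdlib Require Import ClassicalEpsilon.
Set Implicit Arguments. Unset Strict Implicit. Unset Printing Implicit Defensive.
Import Order.TTheory GRing.Theory Num.Theory.

Section Proof.
Variables (Q : finType) (d : nat) (Tu : seq (Q * {ffun 'I_d -> int} * Q))
  (Tf Ts : {set Q * Q * Q}) (Ql : {set Q}).

Local Notation tree := (dtree Q d).
Local Notation rs := (@root_state Q d).
Local Notation rv := (@root_vec Q d).

Fixpoint relaxed (I : {set 'I_d}) (t : tree) : Prop :=
  match t with
  | DLeaf _ _ => True
  | DUnary q v t1 =>
      (exists u : {ffun 'I_d -> int}, (q, u, rs t1) \in Tu /\
         forall i, i \in I -> ((rv t1 i)%:Z = (v i)%:Z + u i)%R) /\ relaxed I t1
  | DBin q v t1 t2 =>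
      (((q, rs t1, rs t2) \in Tf /\ (forall i, i \in I -> rv t1 i = v i) /\
          (forall i, i \in I -> rv t2 i = v i))
       \/ ((q, rs t1, rs t2) \in Ts /\ forall i, i \in I -> rv t1 i + rv t2 i = v i))
      /\ relaxed I t1 /\ relaxed I t2
  end.

Lemma relaxed_full t : deduction_tree Tu Tf Ts t <-> relaxed setT t.
Proof.
elim: t => [q v|q v t1 IH|q v t1 IH1 t2 IH2] /=; first by [].
- split=> [[[u [Hu Hi]] Ht]|[[u [Hu Hi]] Ht]]; (split; [|by apply/IH]).
  + by exists u; split=> // i _; apply: Hi.
  + by exists u; split=> // i; apply: Hi; rewrite in_setT.
- split=> [[H [Ht1 Ht2]]|[H [Ht1 Ht2]]]; (split; [|split; [exact/IH1|exact/IH2]]).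
  + case: H => [[Hf [E1 E2]]|[Hs E]]; [left|right].
    * by split=> //; split=> i _; rewrite ?E1 ?E2.
    * by split=> // i _; apply: E.
  + case: H => [[Hf [E1 E2]]|[Hs E]]; [left|right].
    * split=> //; split; apply/ffunP=> i; [apply: E1|apply: E2]; by rewrite in_setT.
    * split=> // i; apply: E; by rewrite in_setT.
Qed.

Lemma relaxed_sub (I J : {set 'I_d}) t : J \subset I -> relaxed I t -> relaxed J t.
Proof.
move=> /subsetP sJI; elim: t => [//|q v t1 IH|q v t1 IH1 t2 IH2] /=.
- case=> [[u [Hu Hi]] Ht]; split; last exact: IH.
  by exists u; split=> // i /sJI; apply: Hi.
- case=> [H [Ht1 Ht2]]; split; last by split; [apply: IH1|apply: IH2].
  case: H => [[Hf [E1 E2]]|[Hs E]]; [left|right].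
  + by split=> //; split=> i /sJI; [apply: E1|apply: E2].
  + by split=> // i /sJI; apply: E.
Qed.

Definition good (I : {set 'I_d}) h q (v : {ffun 'I_d -> nat}) :=
  exists t, relaxed I t /\ rs t = q /\ (forall i, i \in I -> rv t i = v i) /\
            leaf_covering Ql t /\ height t <= h.

Lemma good_ext (I : {set 'I_d}) h q (v v' : {ffun 'I_d -> nat}) : (forall i, i \in I -> v i = v' i) ->
  good I h q v -> good I h q v'.
Proof.
move=> E [t [H1 [H2 [H3 [H4 H5]]]]]; exists t.
split; [done|split; [done|split; [|by split]]].
by move=> i Hi; rewrite H3 // E.
Qed.

Lemma good_mono (I : {set 'I_d}) h h' q v : h <= h' -> good I h q v -> good I h' q v.
Proof.
move=> le [t [H1 [H2 [H3 [H4 H5]]]]]; exists t.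
split; [done|split; [done|split; [done|split; [done|exact: leq_trans H5 le]]]].
Qed.

Lemma goodI (I : {set 'I_d}) t : relaxed I t -> leaf_covering Ql t -> good I (height t) (rs t) (rv t).
Proof. by move=> H1 H2; exists t. Qed.

Lemma good_step (I : {set 'I_d}) h h' q v : (forall q v, good I h q v -> good I h' q v) ->
  good I h.+1 q v -> good I h'.+1 q v.
Proof.
move=> Hh [t [Hr [Hq [Hv [Hc Hht]]]]].
case: t Hr Hq Hv Hc Hht => [q0 v0|q0 v0 t1|q0 v0 t1 t2] /=.
- by move=> _ Hq Hv Hc _; exists (DLeaf q0 v0).
- case=> [[u [Hu Hi]] Ht1] Hq Hv Hc Hht.
  have [t1' [R1 [S1 [V1 [C1 H1]]]]] : good I h' (rs t1) (rv t1).
    by apply: Hh; apply: good_mono (goodI Ht1 Hc).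
  exists (DUnary q0 v0 t1') => /=.
  split; [split=> //|split; [done|split; [done|split=> //]]].
  by exists u; rewrite S1; split=> // i Hi'; rewrite V1 //; exact: Hi.
- case=> [H [Ht1 Ht2]] Hq Hv [Hc1 Hc2] Hht.
  have [t1' [R1 [S1 [V1 [C1 H1]]]]] : good I h' (rs t1) (rv t1).
    by apply: Hh; apply: good_mono (goodI Ht1 Hc1); rewrite -ltnS (leq_trans _ Hht) // ltnS leq_maxl.
  have [t2' [R2 [S2 [V2 [C2 H2]]]]] : good I h' (rs t2) (rv t2).
    by apply: Hh; apply: good_mono (goodI Ht2 Hc2); rewrite -ltnS (leq_trans _ Hht) // ltnS leq_maxr.
  exists (DBin q0 v0 t1' t2') => /=.
  split; [split; [|by split]|split; [done|split; [done|split=> //]]].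
  + rewrite S1 S2; case: H => [[Hf [E1 E2]]|[Hs E]]; [left|right].
    * by split=> //; split=> i Hi; rewrite ?V1 ?V2 // ?E1 ?E2.
    * by split=> // i Hi; rewrite V1 // V2 // E.
  + by rewrite ltnS geq_max H1 H2.
Qed.

Lemma negpart_le q u q' i : (q, u, q') \in Tu -> negpart (u i) <= maxneg Tu.
Proof.
move=> Hin; rewrite /maxneg.
have H1 := @leq_bigmax_seq _ Tu xpredT (fun r : Q * {ffun 'I_d -> int} * Q => \max_(i < d) negpart (r.1.2 i)) _ Hin isT.
apply: leq_trans H1 => /=; exact: leq_bigmax.
Qed.

Definition next (x : nat) (z : int) : nat :=
  match z with Posz n => x + n | Negz n => x - n.+1 end.

Lemma nextE x z : negpart z <= x -> Posz (next x z) = (Posz x + z)%R.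
Proof. case: z => n; rewrite /negpart /=; first by rewrite PoszD. rewrite NegzE /=; lia. Qed.

Lemma next_ge x z : x - negpart z <= next x z.
Proof. case: z => n; rewrite /negpart /=; first lia. lia. Qed.

Definition upd (v : {ffun 'I_d -> nat}) i0 x : {ffun 'I_d -> nat} :=
  [ffun j => if j == i0 then x else v j].

Lemma lift (I : {set 'I_d}) i0 t x : relaxed I t -> leaf_covering Ql t ->
  maxneg Tu * 2 ^ height t <= x ->
  exists t', relaxed (i0 |: I) t' /\ rs t' = rs t /\ rv t' = upd (rv t) i0 x /\
             leaf_covering Ql t' /\ height t' = height t.
Proof.
elim: t x => [q v|q v t1 IH|q v t1 IH1 t2 IH2] x /=.
- by move=> _ Hc _; exists (DLeaf q (upd v i0 x)).
- case=> [[u [Hu Hi]] Ht1] Hc Hx.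
  have Hn := negpart_le i0 Hu.
  set m := maxneg Tu in IH Hn Hx *; clearbody m.
  have P1 : 0 < 2 ^ height t1 by rewrite expn_gt0.
  have Hm1 : m <= m * 2 ^ height t1 by rewrite leq_pmulr.
  have Hx' : m * 2 ^ height t1 * 2 <= x by rewrite -mulnA -expnSr.
  move: Hm1 Hx' IH; move: (m * 2 ^ height t1) => P Hm1 Hx' IH.
  have Hm : negpart (u i0) <= x by apply: leq_trans Hn _; clear -Hm1 Hx'; lia.
  have Hge := leq_trans (leq_sub2l x Hn) (next_ge x (u i0)).
  move: Hge; move Enx: (next x (u i0)) => nx Hge.
  have [t1' [R1 [S1 [V1 [C1 H1]]]]] := IH nx Ht1 Hc ltac:(clear -Hge Hm1 Hx'; lia).
  exists (DUnary q (upd v i0 x) t1') => /=.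
  split; [split=> //|split; [done|split; [done|split=> //]]]; last by rewrite H1.
  exists u; rewrite S1; split=> // i.
  rewrite V1 /upd !ffunE in_setU1; case: (eqVneq i i0) => [->|ne] /= Hi'.
  + by rewrite -Enx; exact: nextE.
  + exact: Hi.
- case=> [H [Ht1 Ht2]] [Hc1 Hc2] Hx.
  set m := maxneg Tu in IH1 IH2 Hx *; clearbody m.
  set K := m * 2 ^ maxn (height t1) (height t2).
  have HK : K * 2 <= x by rewrite /K -mulnA -expnSr.
  have K1 : m * 2 ^ height t1 <= K by rewrite /K leq_mul2l leq_exp2l // leq_maxl orbT.
  have K2 : m * 2 ^ height t2 <= K by rewrite /K leq_mul2l leq_exp2l // leq_maxr orbT.
  move: HK K1 K2; move: K => K0 HK K1 K2.
  move: K1 IH1 => /[swap]; move: (m * 2 ^ height t1) => P1 IH1 K1.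
  move: K2 IH2 => /[swap]; move: (m * 2 ^ height t2) => P2 IH2 K2.
  case: H => [[Hf [E1 E2]]|[Hs E]].
  + have [t1' [R1 [S1 [V1 [C1 H1]]]]] := IH1 x Ht1 Hc1 ltac:(lia).
    have [t2' [R2 [S2 [V2 [C2 H2]]]]] := IH2 x Ht2 Hc2 ltac:(lia).
    exists (DBin q (upd v i0 x) t1' t2') => /=.
    split; [split; [|by split]|split; [done|split; [done|split=> //]]]; last by rewrite H1 H2.
    left; rewrite S1 S2; split=> //; split=> i;
      rewrite ?V1 ?V2 /upd !ffunE in_setU1; case: (eqVneq i i0) => //= _ Hi';
      [exact: E1|exact: E2].
  + have h2 : x./2 + x./2 <= x by rewrite addnn halfK leq_subr.
    have hK : K0 <= x./2.
      by rewrite -(doubleK K0) half_leq // -muln2.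
    have [t1' [R1 [S1 [V1 [C1 H1]]]]] := IH1 (x - x./2) Ht1 Hc1 ltac:(lia).
    have [t2' [R2 [S2 [V2 [C2 H2]]]]] := IH2 (x./2) Ht2 Hc2 ltac:(lia).
    exists (DBin q (upd v i0 x) t1' t2') => /=.
    split; [split; [|by split]|split; [done|split; [done|split=> //]]]; last by rewrite H1 H2.
    right; rewrite S1 S2; split=> // i.
    rewrite V1 V2 /upd !ffunE in_setU1; case: (eqVneq i i0) => /= [_ _|_ Hi']; first lia.
    exact: E.
Qed.

Lemma chain (T : finType) (S : nat -> {set T}) :
  (forall j, S j \subset S j.+1) ->
  (forall j, S j.+1 \subset S j -> S j.+2 \subset S j.+1) ->
  forall j, S j \subset S #|T|.
Proof.
move=> mono stab.
have monoL : forall i j, i <= j -> S i \subset S j.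
  move=> i j lij; rewrite -(subnKC lij); elim: (j - i) => [|n IH]; first by rewrite addn0.
  by rewrite addnS; exact: subset_trans IH (mono _).
have [j0 [lej0 st0]] : exists j0, j0 <= #|T| /\ S j0.+1 \subset S j0.
  have card_grow : forall n, (forall j, j < n -> ~~ (S j.+1 \subset S j)) -> n <= #|S n|.
    elim=> [|n IH] H; first by [].
    have le := IH (fun j lt => H j (ltnW lt)).
    apply: leq_ltn_trans le _; apply: proper_card; rewrite properE mono /=.
    exact: H.
  case: (boolP (has (fun j => S j.+1 \subset S j) (iota 0 #|T|.+1))).
    case/hasP=> j; rewrite mem_iota add0n => /andP[_ ltj] st; by exists j.
  move/hasPn=> Hn.
  have h2 : #|T|.+1 <= #|S #|T|.+1|.
    by apply: card_grow => j lt; apply: Hn; rewrite mem_iota add0n.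
  have h1 := max_card (S #|T|.+1).
  by have := leq_trans h2 h1; rewrite ltnn.
have stabN : forall n, S (j0 + n).+1 \subset S (j0 + n).
  elim=> [|n IH]; first by rewrite addn0.
  by rewrite addnS; exact: stab.
have toj0 : forall n, S (j0 + n) \subset S j0.
  elim=> [|n IH]; first by rewrite addn0.
  by rewrite addnS; exact: subset_trans (stabN n) IH.
move=> j; case: (leqP j #|T|) => [le|lt]; first exact: monoL.
have lj : j0 <= j by apply: leq_trans lej0 (ltnW lt).
rewrite -(subnKC lj).
exact: subset_trans (toj0 _) (monoL _ _ lej0).
Qed.

Definition pb (P : Prop) : bool := if excluded_middle_informative P then true else false.
Lemma pbP P : pb P <-> P.
Proof. by rewrite /pb; case: excluded_middle_informative. Qed.

Lemma rackoff_step (I : {set 'I_d}) B H0 :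
  (forall h q (v : {ffun 'I_d -> nat}), (exists2 i, i \in I & B <= v i) -> good I h q v -> good I H0 q v) ->
  forall h q v, good I h q v -> good I (H0 + #|Q| * B ^ #|I|) q v.
Proof.
move=> Hhigh.
pose sT : finType := {j : 'I_d | j \in I}.
pose T : finType := (Q * {ffun sT -> 'I_B})%type.
pose vec (c : T) : {ffun 'I_d -> nat} :=
  [ffun j => match (insub j : option sT) with Some i => nat_of_ord (c.2 i) | None => 0 end].
have vecE : forall c j (Hj : j \in I), vec c j = c.2 (Sub j Hj).
  by move=> c j Hj; rewrite ffunE insubT.
have cardT : #|T| = #|Q| * B ^ #|I|.
  by rewrite card_prod card_ffun card_ord card_sig.
have low : forall q v, (forall i, i \in I -> v i < B) ->
    exists c : T, c.1 = q /\ forall i, i \in I -> vec c i = v i.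
  move=> q v Hl.
  exists (q, [ffun i : sT => Ordinal (Hl (val i) (valP i))]); split=> // i Hi.
  by rewrite vecE ffunE.
have dec : forall (v : {ffun 'I_d -> nat}),
    (exists2 i, i \in I & B <= v i) \/ (forall i, i \in I -> v i < B).
  move=> v; case: (boolP [exists i, (i \in I) && (B <= v i)]).
    by case/existsP=> i /andP[? ?]; left; exists i.
  move/existsPn=> H; right=> i Hi; move: (H i); rewrite Hi /= -ltnNge; done.
pose S j := [set c : T | pb (good I (H0 + j) c.1 (vec c))].
have reduce : forall j, S j.+1 \subset S j ->
    forall q v, good I (H0 + j).+1 q v -> good I (H0 + j) q v.
  move=> j /subsetP sub q v Hg.
  case: (dec v) => [hi|lo].
    by apply: good_mono (Hhigh _ _ _ hi Hg); apply: leq_addr.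
  have [c [c1 cv]] := low q v lo.
  have : c \in S j.+1.
    rewrite inE; apply/pbP; rewrite c1 addnS.
    by apply: good_ext Hg => i Hi; rewrite cv.
  move/sub; rewrite inE => /pbP; rewrite c1; apply: good_ext => i Hi; exact: cv.
have monoS : forall j, S j \subset S j.+1.
  move=> j; apply/subsetP=> c; rewrite !inE => /pbP Hg'; apply/pbP.
  by apply: good_mono Hg'; rewrite leq_add2l.
have stabS : forall j, S j.+1 \subset S j -> S j.+2 \subset S j.+1.
  move=> j st; apply/subsetP=> c; rewrite !inE => /pbP Hg'; apply/pbP.
  rewrite !addnS in Hg' *; apply: good_step Hg'; exact: reduce.
move=> h q v Hg.
have Hc := @chain T S monoS stabS h.
rewrite -cardT.
case: (dec v) => [hi|lo].
  by apply: good_mono (Hhigh _ _ _ hi Hg); apply: leq_addr.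
have [c [c1 cv]] := low q v lo.
have : c \in S h.
  rewrite inE; apply/pbP; rewrite c1.
  apply: good_mono (leq_addl H0 h) (good_ext _ Hg) => i Hi; by rewrite cv.
move/(subsetP Hc); rewrite inE => /pbP; rewrite c1; apply: good_ext => i Hi; exact: cv.
Qed.

Lemma gen k : forall I : {set 'I_d}, #|I| = k -> forall h q v, good I h q v ->
  good I (Hbound k #|Q| (maxneg Tu)) q v.
Proof.
elim: k => [|k IH] I HI h q v Hg.
- have := @rackoff_step I 0 0 _ h q v Hg.
  rewrite HI expn0 muln1 add0n; apply.
  by move=> h' q' v' [i]; rewrite (cards0_eq HI) inE.
- set H0 := Hbound k #|Q| (maxneg Tu).
  set B := maxneg Tu * 2 ^ H0.
  have := @rackoff_step I B H0 _ h q v Hg.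
  rewrite HI /= addnC; apply.
  move=> h' q' v' [i0 Hi0 HB] [t [Hr [Hq [Hv [Hc Hh]]]]].
  have HI' : #|I :\ i0| = k by move: HI; rewrite (cardsD1 i0) Hi0 add1n => [[]].
  have Hg' : good (I :\ i0) h' q' v'.
    exists t; split; first by apply: relaxed_sub Hr; apply: subsetDl.
    split=> //; split=> //.
    by move=> i; rewrite in_setD1 => /andP[_ Hi]; apply: Hv.
  have [t' [Hr' [Hq' [Hv' [Hc' Hh']]]]] := IH _ HI' _ _ _ Hg'.
  have HB' : maxneg Tu * 2 ^ height t' <= v' i0.
    apply: leq_trans HB; rewrite /B leq_mul2l leq_exp2l // Hh' orbT //.
  have [t'' [R [S [V [C H]]]]] := lift i0 Hr' Hc' HB'.
  exists t''; rewrite (setD1K Hi0) in R.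
  split; [done|split; [by rewrite S|split; [|split; [done|by rewrite H]]]].
  move=> i Hi; rewrite V /upd ffunE; case: (eqVneq i i0) => [->|ne] //.
  by apply: Hv'; rewrite in_setD1 ne.
Qed.

End Proof.

Theorem lemma5p1 (Q : finType) (d : nat)
  (Tu : seq (Q * {ffun 'I_d -> int} * Q)) (Tf Ts : {set Q * Q * Q})
  (qr : Q) (v0 : {ffun 'I_d -> nat}) (Ql : {set Q}) :
  (exists t : dtree Q d,
      deduction_tree Tu Tf Ts t /\ root_state t = qr /\ root_vec t = v0 /\
      leaf_covering Ql t) ->
  exists t : dtree Q d,
      deduction_tree Tu Tf Ts t /\ root_state t = qr /\ root_vec t = v0 /\
      leaf_covering Ql t /\
      height t <= Hbound d #|Q| (maxneg Tu).
Proof.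
case=> t [Ht [Hq [Hv Hc]]].
have Hg : good Tu Tf Ts Ql setT (height t) qr v0.
  exists t; split; first by apply/relaxed_full.
  by split=> //; split=> [i _|]; [rewrite Hv|].
have HT : #|[set: 'I_d]| = d by rewrite cardsT card_ord.
have [t' [R [S [V [C H]]]]] := gen HT Hg.
exists t'; split; first by apply/relaxed_full.
split=> //; split; last by split.
by apply/ffunP=> i; apply: V; rewrite in_setT.
Qed.
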